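(* There exists a subclass $\mathbf{X}$ of the class $\mathbf{M}$ of all metric spaces such that $\mathbf{P}_{\mathbf{X}}=\mathbf{SI}$.
   Context: All metric spaces are assumed to have nonempty underlying sets. $\mathbf{F}$ is the set of all functions $f:[0,\infty)\to[0,\infty)$. $f\in\mathbf{F}$ is amenable if $f^{-1}(0)=\{0\}$; increasing if $x\le y$ implies $f(x)\le f(y)$; subadditive if $f(x+y)\le f(x)+f(y)$ for all $x,y\ge0$. $\mathbf{SI}$ is the set of all amenable, increasing, subadditive $f\in\mathbf{F}$. For a class $\mathbf{X}$ of metric spaces, $\mathbf{P}_{\mathbf{X}}$ denotes the set of all $f\in\mathbf{F}$ such that for every metric space $(X,d)$, if $(X,d)\in\mathbf{X}$ then $(X,f\circ d)\in\mathbf{X}$ (where $f\circ d(x,y)=f(d(x,y))$; membership requires $f\circ d$ to be a metric). *)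

(* Defs.v *)
From Stdlib Require Import Reals.
Open Scope R_scope.

Definition is_metric_space (T : Type) (d : T -> T -> R) : Prop :=
  inhabited T /\
  (forall x y, 0 <= d x y) /\
  (forall x y, d x y = 0 <-> x = y) /\
  (forall x y, d x y = d y x) /\
  (forall x y z, d x z <= d x y + d y z).

Definition metric_class (X : forall T : Type, (T -> T -> R) -> Prop) : Prop :=
  forall (T : Type) (d : T -> T -> R), X T d -> is_metric_space T d.

(* f belongs to F: f maps [0,oo) into [0,oo) (values off [0,oo) are irrelevant). *)
Definition in_F (f : R -> R) : Prop := forall x, 0 <= x -> 0 <= f x.

Definition amenable (f : R -> R) : Prop :=
  forall x, 0 <= x -> (f x = 0 <-> x = 0).

Definition increasing (f : R -> R) : Prop :=
  forall x y, 0 <= x -> x <= y -> f x <= f y.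

Definition subadditive (f : R -> R) : Prop :=
  forall x y, 0 <= x -> 0 <= y -> f (x + y) <= f x + f y.

Definition SI (f : R -> R) : Prop :=
  in_F f /\ amenable f /\ increasing f /\ subadditive f.

Definition P_ (X : forall T : Type, (T -> T -> R) -> Prop) (f : R -> R) : Prop :=
  in_F f /\
  forall (T : Type) (d : T -> T -> R),
    is_metric_space T d -> X T d -> X T (fun x y => f (d x y)).

(* Main.v *)
Require Import Defs.
From Stdlib Require Import Reals Lra ProofIrrelevance.
Open Scope R_scope.

Definition castR {T : Type} (e : @eq Type R T) (x : R) : T :=
  @eq_rect Type R (fun A : Type => A) x T e.

Definition XX (T : Type) (d : T -> T -> R) : Prop :=
  is_metric_space T d /\
  forall (e : @eq Type R T) (x y z : R), x <= y -> y <= z ->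
    d (castR e x) (castR e y) <= d (castR e x) (castR e z).

Lemma SI_metric (f : R -> R) T (d : T -> T -> R) :
  SI f -> is_metric_space T d -> is_metric_space T (fun x y => f (d x y)).
Proof.
  intros [Hf [Ha [Hi Hs]]] [Hn [H0 [Hnn [Hsy Ht]]]].
  split; [exact Hn|]. split; [intros; apply Hf, H0|].
  split; [intros x y; rewrite <- (Hnn x y); apply Ha, H0|].
  split; [intros; rewrite Hsy; reflexivity|].
  intros x y z. apply Rle_trans with (f (d x y + d y z)).
  - apply Hi; auto.
  - apply Hs; auto.
Qed.

Theorem mainTheorem9 :
  exists X : forall T : Type, (T -> T -> R) -> Prop,
    metric_class X /\ (forall f : R -> R, in_F f -> (P_ X f <-> SI f)).
Proof.
  exists XX. split.
  - intros T d [H _]; exact H.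
  - intros f Hf. split.
    + intros [_ HP].
      assert (Hm : is_metric_space R (fun x y => Rabs (x - y))).
      { split; [exact (inhabits 0)|]. split; [intros; apply Rabs_pos|].
        split; [intros x y; split; intro H;
                 [destruct (Req_dec (x - y) 0); [lra|];
                  exfalso; apply (Rabs_no_R0 _ H0 H)
                 | subst; replace (y - y) with 0 by ring; apply Rabs_R0]|].
        split; [intros; apply Rabs_minus_sym|].
        intros x y z. replace (x - z) with ((x - y) + (y - z)) by ring.
        apply Rabs_triang. }
      assert (HX : XX R (fun x y => Rabs (x - y))).
      { split; [exact Hm|]. intros e x y z Hxy Hyz.
        rewrite (proof_irrelevance _ e eq_refl). unfold castR; simpl.
        rewrite !Rabs_left1 by lra. lra. }
      destruct (HP R _ Hm HX) as [[_ [_ [Hz [_ Ht]]]] Hmono].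
      assert (Ha0 : forall a, 0 <= a -> Rabs (0 - a) = a).
      { intros a Ha. rewrite Rabs_left1 by lra. ring. }
      split; [exact Hf|]. split; [|split].
      * intros x Hx. specialize (Hz 0 x). simpl in Hz. rewrite Ha0 in Hz by lra.
        split; intro H; [apply eq_sym, Hz; exact H | subst; apply Hz; reflexivity].
      * intros x y Hx Hxy. specialize (Hmono eq_refl 0 x y Hx Hxy).
        unfold castR in Hmono; simpl in Hmono. rewrite !Ha0 in Hmono by lra. exact Hmono.
      * intros x y Hx Hy. specialize (Ht 0 x (x + y)). simpl in Ht.
        rewrite !Ha0 in Ht by lra.
        replace (x - (x + y)) with (0 - y) in Ht by ring. rewrite Ha0 in Ht by lra.
        exact Ht.
    + intros HSI. split; [exact Hf|]. intros T d Hm [_ HQ].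
      split; [apply SI_metric; assumption|].
      intros e x y z Hxy Hyz. destruct HSI as [_ [_ [Hi _]]].
      destruct Hm as [_ [Hn _]]. apply Hi; auto.
Qed.
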